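(* Consider the distributed quantized weight-balancing algorithm described in the context on a strongly connected digraph with $N$ nodes, with step-size $\gamma(k)=2^{-n}$ for $2^n-1\le k\le 2^{n+1}-2$. For every $k\in\mathbb{Z}_+$ there exists $k_1\ge k$ such that $\Vert\boldsymbol{\epsilon}(k_1)\Vert_1<2N(N-1)\gamma(k_1)$.
   Context: $\mathcal{G}=(\mathcal{V},\mathcal{E})$, $\mathcal{V}=\{1,\dots,N\}$, no self-loops; $\mathcal{N}_i^-=\{j:(j,i)\in\mathcal{E}\}$, $\mathcal{N}_i^+=\{j:(i,j)\in\mathcal{E}\}$, $d_i^+=|\mathcal{N}_i^+|$. Algorithm: $a_{ij}(0)=1$ if $j\in\mathcal{N}_i^-$ and $0$ otherwise; $b_i(k)=\sum_{j\in\mathcal{N}_i^-}a_{ij}(k)-\sum_{j\in\mathcal{N}_i^+}a_{ji}(k)$; $n_i(k)=1$ if $b_i(k)\ge d_i^+\gamma(k)$, else $0$; $a_{ij}(k+1)=a_{ij}(k)+n_j(k)\gamma(k)$ for $j\in\mathcal{N}_i^-$. $\boldsymbol{\epsilon}(k)=(|b_i(k)|)_{i=1}^N$. *)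

(* Defs.v *)
From HB Require Import structures.
From mathcomp Require Import all_boot all_order all_algebra.
Set Implicit Arguments. Unset Strict Implicit. Unset Printing Implicit Defensive.
Import Order.TTheory GRing.Theory Num.Theory.
Local Open Scope ring_scope.

(* Digraph on nodes 'I_N given by an edge relation e : rel 'I_N,
   where  e j i  means  (j,i) \in E  (edge from j to i). *)

(* Step size: gamma(k) = 2^{-n} for 2^n - 1 <= k <= 2^{n+1} - 2,
   i.e. n = floor(log2 (k+1)). *)
Definition gamma (R : realFieldType) (k : nat) : R :=
  (2%:R ^- trunc_log 2 k.+1).

Definition outdeg (N : nat) (e : rel 'I_N) (i : 'I_N) : nat :=
  #|[set j | e i j]|.

Definition imbalance (R : realFieldType) (N : nat) (e : rel 'I_N)
  (a : 'I_N -> 'I_N -> R) (i : 'I_N) : R :=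
  \sum_(j | e j i) a i j - \sum_(j | e i j) a j i.

Definition nflag (R : realFieldType) (N : nat) (e : rel 'I_N)
  (a : 'I_N -> 'I_N -> R) (k : nat) (i : 'I_N) : R :=
  if (outdeg e i)%:R * gamma R k <= imbalance e a i then 1 else 0.

Fixpoint weights (R : realFieldType) (N : nat) (e : rel 'I_N) (k : nat)
  : 'I_N -> 'I_N -> R :=
  match k with
  | 0 => fun i j => if e j i then 1 else 0
  | k'.+1 => fun i j =>
      let a := weights R e k' in
      if e j i then a i j + nflag e a k' j * gamma R k' else a i j
  end.

Definition b (R : realFieldType) (N : nat) (e : rel 'I_N) (k : nat) (i : 'I_N) : R :=
  imbalance e (weights R e k) i.

Definition eps_norm1 (R : realFieldType) (N : nat) (e : rel 'I_N) (k : nat) : R :=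
  \sum_i `|b R e k i|.

Definition strongly_connected (N : nat) (e : rel 'I_N) : Prop :=
  forall i j : 'I_N, connect e i j.

(* Main.v *)
Require Import Defs.
From HB Require Import structures.
From mathcomp Require Import all_boot all_order all_algebra zify ring lra.
From Stdlib Require Import Classical.
Import Order.TTheory GRing.Theory Num.Theory.
Local Open Scope ring_scope.
Set Implicit Arguments. Unset Strict Implicit.

Section S.
Variables (R : realFieldType) (N : nat) (e : rel 'I_N).
Hypothesis hirr : irreflexive e.

Definition g t := gamma R t.
Definition bb t i := b R e t i.
Definition fire t (i : 'I_N) : bool := (outdeg e i)%:R * g t <= bb t i.
Definition negp (x : R) := Num.max (- x) 0.
Definition M t := \sum_i negp (bb t i).

Lemma bb_succ t i : bb t.+1 i = bb t i + g t * ((\sum_(j | e j i) (fire t j)%:R) - (fire t i)%:R * (outdeg e i)%:R).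
Proof.
rewrite /bb /b /imbalance /=.
rewrite (eq_bigr (fun j => weights R e t i j + (fire t j)%:R * g t)); last first.
  by move=> j ->; rewrite /nflag /fire; case: ifP.
rewrite [X in _ - X](eq_bigr (fun j => weights R e t j i + (fire t i)%:R * g t)); last first.
  by move=> j ->; rewrite /nflag /fire; case: ifP.
rewrite !big_split /= sumr_const -mulr_suml.
have -> : #|[pred j | e i j]| = outdeg e i by rewrite /outdeg cardsE.
rewrite mulr_natr -mulrnAl. ring.
Qed.

Lemma g_pos t : 0 < g t.
Proof. by rewrite /g /gamma invr_gt0 exprn_gt0 // ltr0n. Qed.

Lemma g_phase t n : (2 ^ n <= t.+1 < 2 ^ n.+1)%N -> g t = (2%:R ^+ n)^-1.
Proof. by move=> h; rewrite /g /gamma (trunc_log_eq _ h). Qed.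

Lemma trunc_step t : (trunc_log 2 t.+2 <= (trunc_log 2 t.+1).+1)%N.
Proof.
have h1 := trunc_logP (isT : (1 < 2)%N) (isT : (0 < t.+2)%N).
have h2 := trunc_log_ltn t.+1 (isT : (1 < 2)%N).
have : (2 ^ trunc_log 2 t.+2 <= 2 ^ (trunc_log 2 t.+1).+1)%N by apply: leq_trans h1 h2.
by rewrite leq_exp2l.
Qed.

Lemma g_step t : g t = g t.+1 \/ g t = 2%:R * g t.+1.
Proof.
rewrite /g /gamma.
have := leq_trunc_log 2 (leqnSn t.+1); have := trunc_step t.
set a := trunc_log 2 t.+1; set c := trunc_log 2 t.+2 => h1 h2.
have [->|hne] := eqVneq c a; first by left.
have -> : c = a.+1 by lia.
right; rewrite exprS invfM mulrA divff ?mul1r // pnatr_eq0.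
by [].
Qed.

Definition gran t (x : R) := exists z : int, x = z%:~R * g t.

Lemma gran_add t x y : gran t x -> gran t y -> gran t (x + y).
Proof. by move=> [z ->] [w ->]; exists (z + w); rewrite intrD mulrDl. Qed.
Lemma gran_opp t x : gran t x -> gran t (- x).
Proof. by move=> [z ->]; exists (- z); rewrite intrN mulNr. Qed.
Lemma gran_sum t (P : pred 'I_N) F : (forall j, P j -> gran t (F j)) -> gran t (\sum_(j | P j) F j).
Proof.
move=> h; apply: (big_ind (gran t)) => //; first by exists 0; rewrite mul0r.
exact: gran_add.
Qed.

Lemma weights_gran t i j : gran t (weights R e t i j).
Proof.
elim: t i j => [|t IH] i j /=.
  exists (e j i)%:Z; rewrite /g /gamma trunc_log1 expr0 invr1 mulr1.
  by case: (e j i).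
have hstep : forall x, gran t x -> gran t.+1 x.
  move=> x [z ->]; case: (g_step t) => ->; first by exists z.
  by exists (z * 2); rewrite intrM mulrA.
case: (e j i).
  apply: hstep; apply: gran_add => //.
  by exists (if fire t j then 1 else 0); rewrite /nflag /fire /bb /b; case: ifP => _; rewrite ?mul1r ?mul0r.
exact: hstep.
Qed.

Lemma bb_gran t i : gran t (bb t i).
Proof.
rewrite /bb /b /imbalance; apply: gran_add; last apply: gran_opp;
  by apply: gran_sum => j _; apply: weights_gran.
Qed.


Lemma sum_bb t : \sum_i bb t i = 0.
Proof.
rewrite /bb /b /imbalance sumrB; apply/eqP; rewrite subr_eq0; apply/eqP.
set a := weights R e t.
rewrite (eq_bigr (fun i => \sum_j (if e j i then a i j else 0))); last by move=> i _; rewrite big_mkcond.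
rewrite [RHS](eq_bigr (fun i => \sum_j (if e i j then a j i else 0))); last by move=> i _; rewrite big_mkcond.
by rewrite [RHS]exchange_big.
Qed.

Lemma eps_M t : eps_norm1 R e t = 2%:R * M t.
Proof.
rewrite /eps_norm1 /M mulr_sumr.
have -> : \sum_i `|b R e t i| = \sum_i (bb t i + 2%:R * negp (bb t i)).
  apply: eq_bigr => i _; rewrite /negp /bb.
  case: (lerP 0 (b R e t i)) => h.
    rewrite ger0_norm // max_r; first by rewrite mulr0 addr0.
    by rewrite oppr_le0.
  rewrite ltr0_norm // max_l; last by rewrite oppr_ge0 ltW.
  ring.
by rewrite big_split /= sum_bb add0r.
Qed.

Lemma negp_ge0 x : 0 <= negp x.
Proof. by rewrite /negp le_max lexx orbT. Qed.

Lemma M_ge0 t : 0 <= M t.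
Proof. by apply: sumr_ge0 => i _; apply: negp_ge0. Qed.

Lemma deg_bound (P : pred 'I_N) i : (forall j, P j -> j != i) -> (#|P| <= N.-1)%N.
Proof.
move=> h; rewrite -[X in (_ <= X.-1)%N]card_ord -(cardC1 i).
by apply: subset_leq_card; apply/subsetP => j /h.
Qed.

Lemma outdeg_le i : (outdeg e i <= N.-1)%N.
Proof.
rewrite /outdeg cardsE; apply: (deg_bound (i := i)) => j /=.
by apply: contraTneq => ->; rewrite hirr.
Qed.

Lemma sum_fire_le t i : \sum_(j | e j i) ((fire t j)%:R : R) <= (N.-1)%:R.
Proof.
apply: le_trans (_ : \sum_(j | e j i) (1 : R) <= _).
  by apply: ler_sum => j _; case: (fire t j).
rewrite sumr_const ler_nat; apply: (deg_bound (i := i)) => j /=.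
by apply: contraTneq => ->; rewrite hirr.
Qed.

Lemma sum_fire_ge0 t i : 0 <= \sum_(j | e j i) ((fire t j)%:R : R).
Proof. by apply: sumr_ge0 => j _; apply: ler0n. Qed.

Lemma negp_mono t i : negp (bb t.+1 i) <= negp (bb t i).
Proof.
rewrite bb_succ /negp; have gp := g_pos t; have s0 := sum_fire_ge0 t i.
set S := \sum_(j | e j i) _.
case hf: (fire t i); move: hf; rewrite /fire => hf.
  rewrite mul1r [X in X <= _]max_r ?le_max ?lexx ?orbT //.
  rewrite oppr_le0.
  have : 0 <= g t * S by apply: mulr_ge0 => //; apply: ltW.
  move: hf; rewrite mulrC mulrBr; lra.
rewrite mul0r subr0 ge_max !le_max lexx orbT andbT; apply/orP; left.
have : 0 <= g t * S by apply: mulr_ge0 => //; apply: ltW.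
lra.
Qed.

Lemma M_mono t : M t.+1 <= M t.
Proof. by apply: ler_sum => i _; apply: negp_mono. Qed.

Lemma M_mono' t s : (t <= s)%N -> M s <= M t.
Proof.
move=> /subnK <-; elim: (s - t)%N => [|n IH] //=.
by rewrite addSn; apply: le_trans IH; apply: M_mono.
Qed.

Lemma M_desc t i j : e j i -> bb t i < 0 -> fire t j -> M t.+1 <= M t - g t.
Proof.
move=> eji hneg hfj.
have hfi : fire t i = false.
  apply/negbTE; rewrite /fire -ltNge; apply: lt_le_trans hneg _.
  by apply: mulr_ge0 => //; apply: ltW; apply: g_pos.
have hS : 1 <= \sum_(k | e k i) ((fire t k)%:R : R).
  rewrite (bigD1 j) //= hfj lerDl; apply: sumr_ge0 => k _; apply: ler0n.
have [z hz] := bb_gran t i.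
have gp := g_pos t.
have hzl : bb t i <= - g t.
  rewrite hz -mulN1r ler_pM2r //.
  have : (z%:~R : R) < 0 by move: hneg; rewrite hz pmulr_llt0.
  rewrite ltrz0 => hz0.
  have : (z%:~R : R) <= ((-1 : int)%:~R) by rewrite ler_int; lia.
  by rewrite intrN mulr1z.
have hi : negp (bb t.+1 i) <= negp (bb t i) - g t.
  rewrite bb_succ hfi mul0r subr0 /negp.
  rewrite [X in _ <= X - _]max_l; last by lra.
  rewrite ge_max; apply/andP; split; last by lra.
  have : g t <= g t * \sum_(j | e j i) ((fire t j)%:R : R) by rewrite ler_peMr // ltW.
  lra.
rewrite /M (bigD1 i) //= [X in _ <= X - _](bigD1 i) //=.
have : \sum_(k | k != i) negp (bb t.+1 k) <= \sum_(k | k != i) negp (bb t k).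
  by apply: ler_sum => k _; apply: negp_mono.
lra.
Qed.

Lemma eps_P t : eps_norm1 R e t = 2%:R * \sum_i Num.max (bb t i) 0.
Proof.
rewrite /eps_norm1 mulr_sumr.
have -> : \sum_i `|b R e t i| = \sum_i (2%:R * Num.max (bb t i) 0 - bb t i).
  apply: eq_bigr => i _; rewrite /bb.
  case: (lerP 0 (b R e t i)) => h.
    rewrite ger0_norm //; ring.
  rewrite ltr0_norm //.
  ring.
by rewrite sumrB sum_bb subr0.
Qed.

Lemma fire_exists t : ~ (eps_norm1 R e t < (2 * N * (N - 1))%:R * g t) -> (2 <= N)%N -> exists i, fire t i.
Proof.
move=> h N2; apply: NNPP => hn; apply: h.
have gp := g_pos t.
have hall : forall i, Num.max (bb t i) 0 < (N.-1)%:R * g t.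
  move=> i.
  have nf : ~~ fire t i by apply/negP => hf; apply: hn; exists i.
  move: nf; rewrite /fire -ltNge => hlt.
  rewrite gt_max; apply/andP; split.
    apply: lt_le_trans hlt _; rewrite ler_pM2r ?g_pos // ler_nat; exact: outdeg_le.
  by apply: mulr_gt0 => //; rewrite ltr0n; lia.
have N0 : (0 < N)%N by lia.
have : \sum_i Num.max (bb t i) 0 < \sum_(i < N) (N.-1)%:R * g t.
  apply: ltr_sum => //; apply/hasP; exists (Ordinal N0) => //; by rewrite mem_index_enum.
rewrite sumr_const card_ord eps_P => hs.
have -> : (2 * N * (N - 1))%:R * g t = 2%:R * ((N.-1)%:R * g t *+ N) :> R.
  by rewrite subn1 !natrM -mulr_natl; ring.
by rewrite ltr_pM2l ?ltr0n.
Qed.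

Definition fcnt t0 i s : nat := \sum_(u < s) (fire (t0 + u) i : nat).
Definition rcnt t0 i s : nat := \sum_(j | e j i) fcnt t0 j s.

Lemma fcnt_S t0 i s : fcnt t0 i s.+1 = (fcnt t0 i s + fire (t0 + s) i)%N.
Proof. by rewrite /fcnt big_ord_recr. Qed.

Lemma rcnt_S t0 i s : rcnt t0 i s.+1 = (rcnt t0 i s + \sum_(j | e j i) (fire (t0 + s) j : nat))%N.
Proof. by rewrite /rcnt -big_split; apply: eq_bigr => j _; rewrite fcnt_S. Qed.

Lemma nonneg_succ t i : 0 <= bb t i -> 0 <= bb t.+1 i.
Proof.
move=> h; have := negp_mono t i; rewrite /negp (max_r (_ : - bb t i <= 0)) ?oppr_le0 //.
by rewrite ge_max lexx andbT oppr_le0.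
Qed.

Lemma nonneg_stay t i s : 0 <= bb t i -> 0 <= bb (t + s) i.
Proof. by move=> h; elim: s => [|s IH]; rewrite ?addn0 // addnS; apply: nonneg_succ. Qed.

Fixpoint K n := if n is n'.+1 then (2 * N.-1 * (K n' + 1))%N else 0%N.

Hypothesis hN : (2 <= N)%N.

Lemma K_mono m n : (m <= n)%N -> (K m <= K n)%N.
Proof.
apply: (homo_leq (f := K) (r := fun x y => is_true (x <= y)%N) (@leqnn) (@leq_trans)) => k /=.
apply: leq_trans (leq_addr 1 _) _; apply: leq_pmull; lia.
Qed.

Section Stall.
Variables (t0 T : nat).
Hypothesis hg : forall s, (s < T)%N -> g (t0 + s) = g t0.
Hypothesis hno : forall s i j, (s < T)%N -> e j i -> bb (t0 + s) i < 0 -> ~~ fire (t0 + s) j.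

Lemma ident i s : (s <= T)%N ->
  bb (t0 + s) i = bb t0 i + g t0 * ((rcnt t0 i s)%:R - (fcnt t0 i s)%:R * (outdeg e i)%:R).
Proof.
elim: s => [|s IH] hs.
  by rewrite addn0 /rcnt /fcnt big1 ?big_ord0 ?mul0r ?subr0 ?mulr0 ?addr0 // => j _; rewrite big_ord0.
rewrite addnS bb_succ IH ?(ltnW hs) // hg // rcnt_S fcnt_S !natrD natr_sum.
ring.
Qed.

Lemma neg_const i s : bb t0 i < 0 -> (s <= T)%N -> bb (t0 + s) i = bb t0 i.
Proof.
move=> hn; elim: s => [|s IH] hs; first by rewrite addn0.
rewrite addnS bb_succ IH ?(ltnW hs) //.
have -> : fire (t0 + s) i = false.
  apply/negbTE; rewrite /fire -ltNge IH ?(ltnW hs) //; apply: lt_le_trans hn _.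
  by apply: mulr_ge0 => //; apply: ltW; apply: g_pos.
rewrite big1 ?mul0r ?subr0 ?mulr0 ?addr0 // => j hj.
by rewrite (negbTE (hno hs hj _)) // IH ?(ltnW hs).
Qed.

Lemma neg_nofire i : bb t0 i < 0 -> fcnt t0 i T = 0%N.
Proof.
move=> hn; rewrite /fcnt big1 // => u _.
have hu := ltn_ord u.
suff -> : fire (t0 + u) i = false by [].
apply/negbTE; rewrite /fire -ltNge neg_const ?(ltnW hu) //; apply: lt_le_trans hn _.
by apply: mulr_ge0 => //; apply: ltW; apply: g_pos.
Qed.

Lemma nbr_nofire i j : e j i -> bb t0 i < 0 -> fcnt t0 j T = 0%N.
Proof.
move=> hji hn; rewrite /fcnt big1 // => u _.
have hu := ltn_ord u.
by rewrite (negbTE (hno hu hji _)) // neg_const // ltnW.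
Qed.

Lemma rbound i s : 0 <= bb t0 i -> (s <= T)%N ->
  (rcnt t0 i s <= 2 * N.-1 * (fcnt t0 i s + 1))%N.
Proof.
move=> h0 hs.
set d := outdeg e i.
have gp := g_pos t0.
have inv : forall s', (s' <= T)%N -> bb (t0 + s') i <=
   Num.max (bb t0 i) ((d + N.-1)%:R * g t0) + ((N.-1 * fcnt t0 i s')%:R) * g t0.
  elim=> [|s' IH] hs'.
    rewrite addn0 /fcnt big_ord0 muln0 mul0r addr0 le_max lexx //.
  have IH' := IH (ltnW hs').
  rewrite addnS bb_succ hg // fcnt_S.
  have hS := sum_fire_le (t0 + s') i; have hS0 := sum_fire_ge0 (t0 + s') i.
  set S := \sum_(j | e j i) _ in hS hS0 *.
  have h1 : g t0 * S <= (N.-1)%:R * g t0 by rewrite mulrC ler_pM2r.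
  have h2 : 0 <= g t0 * d%:R by apply: mulr_ge0; [apply: ltW|apply: ler0n].
  case hf: (fire (t0 + s') i); move: hf; rewrite /fire hg // => hf.
    rewrite addn1 mulnS natrD mulrDl mul1r.
    move: IH'; rewrite -/d !natrD !mulrDl mulrBr => IH'.
    lra.
  rewrite addn0 mul0r subr0.
  have hm : (d + N.-1)%:R * g t0 <= Num.max (bb t0 i) ((d + N.-1)%:R * g t0) by rewrite le_max lexx orbT.
  have hp : 0 <= (N.-1 * fcnt t0 i s')%:R * g t0 by apply: mulr_ge0; [apply: ler0n|apply: ltW].
  move/negbT: hf; rewrite -ltNge -/d => hf.
  set mx := Num.max _ _ in hm *.
  rewrite natrD mulrDl in hm.
  lra.
have := inv s hs; rewrite ident //.
have hmax : Num.max (bb t0 i) ((d + N.-1)%:R * g t0) <= bb t0 i + (d + N.-1)%:R * g t0.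
  rewrite ge_max; apply/andP; split.
    by rewrite lerDl; apply: mulr_ge0; [apply: ler0n|apply: ltW].
  by rewrite lerDr.
move=> hle.
have : g t0 * (rcnt t0 i s)%:R <= g t0 * (d + N.-1 + N.-1 * fcnt t0 i s + fcnt t0 i s * d)%:R.
  rewrite !natrD !natrM; move: hle hmax; rewrite !natrD !natrM.
  set r := (rcnt t0 i s)%:R; set f := (fcnt t0 i s)%:R.
  move=> hle hmax.
  have E : g t0 * (r - f * d%:R) = g t0 * r - g t0 * f * d%:R by ring.
  rewrite E in hle.
  have E2 : g t0 * (d%:R + N.-1%:R + N.-1%:R * f + f * d%:R) =
     (d%:R + N.-1%:R) * g t0 + N.-1%:R * f * g t0 + g t0 * f * d%:R by ring.
  rewrite E2.
  lra.
rewrite ler_pM2l // ler_nat => hr.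
have := outdeg_le i; rewrite -/d => hd.
apply: leq_trans hr _; nia.
Qed.

Lemma layer p i : path e i p -> bb t0 (last i p) < 0 -> (fcnt t0 i T <= K (size p))%N.
Proof.
elim: p i => [|j p IH] i /=.
  by move=> _ hn; rewrite neg_nofire.
move=> /andP[hij hp] hl.
have IHj := IH j hp hl.
case: (ltP (bb t0 j) 0) => hj.
  by rewrite (nbr_nofire hij hj).
have h1 : (fcnt t0 i T <= rcnt t0 j T)%N.
  by rewrite /rcnt (bigD1 i) //= leq_addr.
apply: leq_trans h1 _; apply: leq_trans (rbound hj (leqnn _)) _.
by rewrite leq_mul2l leq_add2r IHj orbT.
Qed.

Hypothesis hsc : strongly_connected e.
Hypothesis hf : forall s, (s < T)%N -> exists i, fire (t0 + s) i.
Hypothesis hneg : exists i0, bb t0 i0 < 0.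

Lemma stall_bound : (T <= N * K N)%N.
Proof.
have [i0 hi0] := hneg.
have hT : (T <= \sum_i fcnt t0 i T)%N.
  rewrite /fcnt exchange_big /=.
  rewrite -[X in (X <= _)%N]card_ord -sum1_card.
  apply: leq_sum => u _.
  have [i hi] := hf (ltn_ord u).
  by rewrite (bigD1 i) //= hi.
apply: leq_trans hT _.
rewrite -[X in (_ <= X * _)%N]card_ord -sum_nat_const.
apply: leq_sum => i _.
have := hsc i i0 => /connectP[p hp hl].
move: hi0; rewrite hl; case/shortenP: hp => p' hp' hu _ hi0.
apply: leq_trans (layer hp' hi0) _.
apply: K_mono.
have := card_uniqP hu; move=> /= hc.
have := max_card (mem (i :: p')); rewrite card_ord hc /=.
by move=> h; apply: ltnW.
Qed.
End Stall.

Hypothesis hsc : strongly_connected e.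

Lemma w0_bound i j : 0 <= weights R e 0 i j <= 1.
Proof. by rewrite /=; case: (e j i); rewrite ?lexx ?ler01. Qed.

Lemma M0_bound t : M t <= (N * N)%:R.
Proof.
apply: le_trans (M_mono' (leq0n t)) _.
apply: le_trans (_ : \sum_(i < N) (N%:R : R) <= _); last by rewrite sumr_const card_ord natrM mulr_natr.
apply: ler_sum => i _; rewrite /negp ge_max ler0n andbT /bb /b /imbalance opprB.
have h1 : \sum_(j | e i j) weights R e 0 j i <= N%:R.
  apply: le_trans (_ : \sum_(j | e i j) (1 : R) <= _).
    by apply: ler_sum => j _; case/andP: (w0_bound j i).
  rewrite sumr_const ler_nat; apply: leq_trans (max_card _) _; by rewrite card_ord.
have h2 : 0 <= \sum_(j | e j i) weights R e 0 i j.
  by apply: sumr_ge0 => j _; case/andP: (w0_bound i j).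
lra.
Qed.

Variable k : nat.
Hypothesis H : forall t, (k <= t)%N -> ~ (eps_norm1 R e t < (2 * N * (N - 1))%:R * g t).

Lemma window t c : (k <= t)%N -> (N * K N < c)%N ->
  (forall s, (s < c)%N -> g (t + s) = g t) -> M (t + c) <= M t - g t.
Proof.
move=> hk hc hg.
case: (boolP [exists s : 'I_c, [exists i, [exists j, e j i && (bb (t + s) i < 0) && fire (t + s) j]]]).
  move/existsP => [s /existsP [i /existsP [j /andP[/andP[hji hn] hfj]]]].
  have := M_desc hji hn hfj; rewrite hg //.
  have h1 : M (t + c) <= M (t + s).+1 by apply: M_mono'; rewrite -addnS leq_add2l.
  have h2 : M (t + s) <= M t by apply: M_mono'; apply: leq_addr.
  lra.
move=> hnot; exfalso.
have hno : forall s i j, (s < c)%N -> e j i -> bb (t + s) i < 0 -> ~~ fire (t + s) j.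
  move=> s i j hs hji hn; apply/negP => hfj; apply: (negP hnot).
  apply/existsP; exists (Ordinal hs); apply/existsP; exists i; apply/existsP; exists j.
  by rewrite hji hn hfj.
have hf : forall s, (s < c)%N -> exists i, fire (t + s) i.
  move=> s _; apply: fire_exists => //; apply: H; apply: leq_trans hk (leq_addr _ _).
have hneg : exists i0, bb t i0 < 0.
  apply: NNPP => hn; apply: (H hk).
  have hM : M t = 0.
    rewrite /M big1 // => i _; rewrite /negp max_r // oppr_le0.
    by rewrite leNgt; apply/negP => hi; apply: hn; exists i.
  rewrite eps_M hM mulr0; apply: mulr_gt0; last by apply: g_pos.
  by rewrite ltr0n; lia.
have := stall_bound hg hno hsc hf hneg; lia.
Qed.

Lemma phase n : (N * K N < n)%N -> (k <= 2^n - 1)%N ->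
  M (2^n.+1 - 1) <= M (2^n - 1) - (2%:R ^+ (N * K N).+1)^-1.
Proof.
set p := (N * K N)%N => hpn hk.
set q := (n - p.+1)%N.
have hn : n = (q + p.+1)%N by rewrite /q subnK.
have hP : (0 < 2^p)%N by rewrite expn_gt0.
have hQ : (0 < 2^q)%N by rewrite expn_gt0.
have E1 : (2^n = 2^q * 2^p * 2)%N by rewrite hn expnD expnS; lia.
have E2 : (2^n.+1 = 2 * 2^n)%N by rewrite expnS.
have hpc : (p < 2^p)%N by apply: ltn_expl.
have claim : forall m, (m <= 2^q)%N ->
    M (2^n - 1 + m * 2^p) <= M (2^n - 1) - m%:R * (2%:R ^+ n)^-1.
  elim=> [|m IH] hm.
    by rewrite mul0n addn0 mul0r subr0.
  have hmP : (m.+1 * 2^p <= 2^q * 2^p)%N by rewrite leq_mul2r hm orbT.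
  rewrite mulSn in hmP.
  have hgt : forall s, (s < 2^p)%N -> g (2^n - 1 + m * 2^p + s) = (2%:R ^+ n)^-1.
    move=> s hs; apply: g_phase.
    move: hmP E1 E2 hs; set X := (m * 2^p)%N; set Y := (2^q * 2^p)%N; set P := (2^p)%N.
    move=> hmP E1 E2 hs; rewrite E2; apply/andP; split; lia.
  have hw := window (t := 2^n - 1 + m * 2^p) (c := 2^p).
  have hk' : (k <= 2^n - 1 + m * 2^p)%N by apply: leq_trans hk (leq_addr _ _).
  have hg0 : g (2^n - 1 + m * 2^p) = (2%:R ^+ n)^-1.
    by rewrite -[X in g X]addn0; apply: hgt.
  have hwin : forall s, (s < 2^p)%N -> g (2^n - 1 + m * 2^p + s) = g (2^n - 1 + m * 2^p).
    by move=> s hs; rewrite hgt // hg0.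
  have := hw hk' hpc hwin; rewrite hg0.
  have -> : (2^n - 1 + m * 2^p + 2^p = 2^n - 1 + m.+1 * 2^p)%N by rewrite mulSn; lia.
  have := IH (ltnW hm).
  have -> : (m.+1)%:R = m%:R + 1 :> R by rewrite -addn1 natrD.
  rewrite mulrDl mul1r.
  lra.
have := claim _ (leqnn _).
have -> : (2^q)%:R * (2%:R ^+ n)^-1 = (2%:R ^+ p.+1)^-1 :> R.
  rewrite hn natrX exprD invfM mulrA divff ?mul1r //.
  by rewrite expf_neq0 // pnatr_eq0.
have : M (2^n.+1 - 1) <= M (2^n - 1 + 2^q * 2^p).
  apply: M_mono'; move: E1 E2; set Y := (2^q * 2^p)%N => E1 E2; lia.
lra.
Qed.

Lemma phases j n0 : (N * K N < n0)%N -> (k <= 2^n0 - 1)%N ->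
  M (2^(n0 + j) - 1) <= M (2^n0 - 1) - j%:R * (2%:R ^+ (N * K N).+1)^-1.
Proof.
move=> h1 h2; elim: j => [|j IH].
  by rewrite addn0 mul0r subr0.
have hk : (k <= 2^(n0 + j) - 1)%N.
  apply: leq_trans h2 _; apply: leq_sub2r; apply: leq_pexp2l => //; apply: leq_addr.
have := phase (n := n0 + j) (leq_trans h1 (leq_addr _ _)) hk.
have -> : (j.+1)%:R = j%:R + 1 :> R by rewrite -addn1 natrD.
rewrite addnS mulrDl mul1r.
lra.
Qed.

End S.

Unset Implicit Arguments.

Theorem lemma6 (R : realFieldType) (N : nat) (e : rel 'I_N)
  (hN : (2 <= N)%N) (hirr : irreflexive e) (hsc : strongly_connected e) :
  forall k : nat, exists k1 : nat, (k <= k1)%N /\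
    eps_norm1 R e k1 < (2 * N * (N - 1))%:R * gamma R k1.
Proof.
move=> k; apply: NNPP => hne.
have H : forall t, (k <= t)%N -> ~ (eps_norm1 R e t < (2 * N * (N - 1))%:R * g R t).
  by move=> t hk hlt; apply: hne; exists t.
set p := (N * K N N)%N.
set n0 := (p.+1 + k)%N.
have h1 : (p < n0)%N by rewrite /n0; lia.
have h2 : (k <= 2^n0 - 1)%N.
  have := ltn_expl k (isT : (1 < 2)%N).
  have : (2^k <= 2^n0)%N by apply: leq_pexp2l => //; rewrite /n0 leq_addl.
  lia.
set j := ((N * N).+1 * 2^p.+1)%N.
have := phases hirr hN hsc H j h1 h2.
have := M0_bound R e (2^n0 - 1).
have := M_ge0 R e (2^(n0 + j) - 1).
have -> : j%:R / 2%:R ^+ p.+1 = (N * N).+1%:R :> R.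
  rewrite /j natrM natrX mulfK //.
  by rewrite expf_neq0 // pnatr_eq0.
have -> : ((N * N).+1)%:R = (N * N)%:R + 1 :> R by rewrite -addn1 natrD.
lra.
Qed.
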